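(* Let $\rho\in L^1(\mathbb R^2)$, $\rho\ge0$, satisfy $\int_{\mathbb R^2}\rho\ln\rho\le C_0$, $\int_{\mathbb R^2}\rho=\beta$, $\int_{\mathbb R^2}|x|^2\rho\le C_0$, and define $u(x)=-\frac1{2\pi}\int_{\mathbb R^2}\ln|x-y|\rho(y)\,d^2y$ for $x\in\mathbb R^2$. Then there exist constants $C,R$ depending only on $C_0$ and $\beta$ such that $$\Big|u(x)+\frac{\beta}{2\pi}\ln|x|\Big|\le C\quad\text{for all }|x|>R.$$ *)

(* Defs.v *)
(* R^2 is modelled as R * R with the
   product Lebesgue measure (lebesgue_measure \x lebesgue_measure). *)
From HB Require Import structures.
From mathcomp Require Import all_boot all_order all_algebra.
From mathcomp Require Import all_classical all_reals all_analysis.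
Set Implicit Arguments. Unset Strict Implicit. Unset Printing Implicit Defensive.
Import Order.TTheory GRing.Theory Num.Theory.
Local Open Scope classical_set_scope.
Local Open Scope ring_scope.

Definition leb2 (R : realType) :=
  ((@lebesgue_measure R) \x (@lebesgue_measure R))%E.

Arguments leb2 R : clear implicits.

Definition sqnorm2 (R : realType) (x : R * R) : R := x.1 ^+ 2 + x.2 ^+ 2.
Definition norm2 (R : realType) (x : R * R) : R := Num.sqrt (sqnorm2 x).

Definition logpot (R : realType) (rho : R * R -> R) (x : R * R) : R :=
  - (2 * pi)^-1 * Rintegral (leb2 R) [set: R * R]
      (fun y => ln (norm2 (x.1 - y.1, x.2 - y.2)) * rho y).

(* Main.v *)
Require Import Defs.
From HB Require Import structures.
From mathcomp Require Import all_boot all_order all_algebra.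
From mathcomp Require Import all_classical all_reals all_analysis.
From mathcomp Require Import measurable_realfun.
From mathcomp Require Import ring lra.
Import Order.TTheory GRing.Theory Num.Theory.
Local Open Scope classical_set_scope.
Local Open Scope ring_scope.

Section RealLemmas.
Context {R : realType}.

Lemma ln_le_sub1 (u : R) : 0 < u -> ln u <= u - 1.
Proof.
move=> u0; have := @le_ln1Dx R (u - 1); rewrite subrKC; apply.
by rewrite ltrBrDl addrN.
Qed.

Lemma young (a c : R) : 0 <= a -> 0 < c -> a * ln c <= a * ln a + c.
Proof.
move=> a0 c0; have [->|ap] := eqVneq a 0; first by rewrite !mul0r add0r ltW.
have a1 : 0 < a by rewrite lt_def ap.
have h := @ln_le_sub1 (c / a) (divr_gt0 c0 a1).
rewrite ln_div ?posrE // in h.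
rewrite -lerBlDl -mulrBr.
apply: (le_trans (y := a * (c / a - 1))); first by rewrite ler_pM2l.
by rewrite mulrBr mulr1 mulrCA divff ?mulr1 // lerBlDr lerDl ltW.
Qed.
End RealLemmas.
Section Dyadic.
Context {R : realType}.
Lemma dyadic (t : R) : exists m : nat, t < 2^+m /\ (m = 0%N \/ 2^+m.-1 <= t).
Proof.
have ex : exists n : nat, t < 2^+n.
  have [t0|t0] := ltP t 0; first by exists 0%N; rewrite expr0 (lt_le_trans t0).
  exists (Num.Def.archi_bound t); apply: (lt_le_trans (archi_boundP t0)).
  rewrite -natrX ler_nat; apply: ltnW; exact: ltn_expl.
case: (ex_minnP ex) => m Hm Hmin; exists m; split => //.
case: m Hm Hmin => [|k] Hm Hmin; first by left.
right; rewrite /= leNgt; apply/negP => H; have := Hmin k H.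
by rewrite ltnn.
Qed.
End Dyadic.
Section LogDiff.
Context {R : realType}.
Lemma logdiff (Q s q : R) : 1 < Q -> s <= 2 * Q + 2 * q -> Q <= 2 * s + 2 * q ->
  0 <= q -> `|ln s - ln Q| <= 3 + 4 * q + Num.max (- ln s) 0.
Proof.
move=> Q1 sQ Qs q0; have Q0 : 0 < Q by apply: lt_trans Q1.
have lQ := ln_gt0 Q1.
have mx1 : - ln s <= Num.max (- ln s) 0 by rewrite le_max lexx.
have mx0 : 0 <= Num.max (- ln s) 0 by rewrite le_max lexx orbT.
rewrite ler_norml; apply/andP; split.
  have [s0|s0] := leP s 0.
    have h := @ln_le_sub1 R Q Q0; rewrite (ln0 s0) in mx1 mx0 *; lra.
  have [qQ|qQ] := leP (4 * q) Q.
    have s4 : Q <= 4 * s by lra.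
    have h := @ln_le_sub1 R (Q / s) (divr_gt0 Q0 s0).
    rewrite ln_div ?posrE // in h.
    have : Q / s <= 4 by rewrite ler_pdivrMr.
    lra.
  have h := @ln_le_sub1 R Q Q0; lra.
have [s0|s0] := leP s 0; first by rewrite (ln0 s0) in mx0 *; lra.
have h := @ln_le_sub1 R (s / Q) (divr_gt0 s0 Q0).
rewrite ln_div ?posrE // in h.
have : s / Q <= 2 + 2 * q by rewrite ler_pdivrMr //; nra.
lra.
Qed.
End LogDiff.
Section Pointwise.
Context {R : realType}.

Lemma ln_sqrt (s : R) : ln (Num.sqrt s) = ln s / 2.
Proof.
have [s0|s0] := leP s 0.
  have -> : Num.sqrt s = 0.
    by apply/eqP; rewrite eq_le sqrtr_ge0 andbT -sqrtr0 ler_sqrt.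
  by rewrite !ln0 // mul0r.
have d0 : 0 < Num.sqrt s by rewrite sqrtr_gt0.
rewrite -{2}(sqr_sqrtr (ltW s0)) lnXn //.
lra.
Qed.

Lemma sing_bound (a z1 z2 : R) : 0 <= a ->
  a * Num.max (- ln (z1^+2 + z2^+2)) 0 <= 2 * Num.max (a * ln a) 0 \/
  exists k : nat, `|z1| <= (2^+k)^-1 /\ `|z2| <= (2^+k)^-1 /\
    a * Num.max (- ln (z1^+2 + z2^+2)) 0 <= 2 * Num.max (a * ln a) 0 + 2 * 2^+k.+1.
Proof.
move=> a0; set s := z1^+2 + z2^+2.
have P0 : 0 <= Num.max (a * ln a) 0 by rewrite le_max lexx orbT.
have P1 : a * ln a <= Num.max (a * ln a) 0 by rewrite le_max lexx.
have [s1|s1] := leP 1 s.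
  left; rewrite (_ : Num.max _ _ = 0) ?mulr0; first lra.
  by apply/max_idPr; rewrite lerNl oppr0 ln_ge0.
have [s0|s0] := leP s 0.
  left; rewrite ln0 // oppr0 maxxx mulr0; lra.
right; set d := Num.sqrt s.
have d0 : 0 < d by rewrite sqrtr_gt0.
have d1 : d < 1 by rewrite -sqrtr1 ltr_sqrt.
have [m [Hm1 Hm2]] := dyadic d^-1.
have id1 : 1 < d^-1 by rewrite invf_gt1.
case: m Hm1 Hm2 => [|k] Hm1 Hm2.
  by move: Hm1; rewrite expr0 => /(lt_trans id1); rewrite ltxx.
case: Hm2 => // /= Hk; exists k.
have dk : d <= (2^+k)^-1.
  by rewrite -[d]invrK lef_pV2 ?posrE ?exprn_gt0 ?invr_gt0.
have zd i : i^+2 <= s -> `|i| <= d.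
  by move=> h; rewrite -sqrtr_sqr ler_sqrt // ltW.
have z1s : z1^+2 <= s by rewrite /s lerDl sqr_ge0.
have z2s : z2^+2 <= s by rewrite /s lerDr sqr_ge0.
split; first exact: le_trans (zd _ z1s) dk.
split; first exact: le_trans (zd _ z2s) dk.
have Y := @young R a d^-1 a0 ltac:(by rewrite invr_gt0).
rewrite lnV ?posrE // /d ln_sqrt in Y.
have -> : Num.max (- ln s) 0 = - ln s.
  by apply/max_idPl; rewrite lerNr oppr0 ln_le0 // ltW.
have := ltW Hm1; lra.
Qed.
End Pointwise.
Section NegBound.
Context {R : realType}.
Lemma abs_le_sq (y : R) : `|y| <= 1 + y^+2.
Proof. rewrite -real_normK ?num_real //; have := normr_ge0 y; nra. Qed.

Lemma neg_bound (a y1 y2 : R) : 0 <= a -> exists k : nat,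
  `|y1| <= 2^+k /\ `|y2| <= 2^+k /\
  Num.max (- (a * ln a)) 0 <= (6 + 3 * (y1^+2 + y2^+2)) * a + ((2^+k)^+3)^-1.
Proof.
move=> a0; set t := `|y1| + `|y2|.
have [m [Hm1 Hm2]] := @dyadic R t.
exists m.
have t1 : `|y1| <= t by rewrite /t lerDl normr_ge0.
have t2 : `|y2| <= t by rewrite /t lerDr normr_ge0.
split; first by apply: (le_trans t1); exact: ltW.
split; first by apply: (le_trans t2); exact: ltW.
have p0 : 0 < 2 ^+ m :> R by rewrite exprn_gt0.
have c0 : 0 < ((2 ^+ m) ^+ 3)^-1 :> R by rewrite invr_gt0 exprn_gt0.
have Y := @young R a _ a0 c0.
rewrite lnV ?posrE ?exprn_gt0 // !lnXn // in Y.
set L := ln 2 in Y.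
have L0 : 0 <= L by rewrite ln_ge0 // ler1n.
have L1 : L <= 1 by rewrite /L; have := @ln_le_sub1 R 2 ltac:(by []); lra.
have tq : t <= 2 + (y1^+2 + y2^+2).
  by have := abs_le_sq y1; have := abs_le_sq y2; rewrite /t; lra.
have mq : m%:R <= 2 + (y1^+2 + y2^+2) :> R.
  case: Hm2 => [->|Hm]; first by rewrite addr_ge0 ?addr_ge0 ?sqr_ge0.
  apply: le_trans tq; apply: le_trans Hm.
  case: m {Hm1 p0 c0 Y} => [|m]; first exact: exprn_ge0.
  by rewrite -natrX ler_nat /=; exact: ltn_expl.
have mL : L *+ m <= 2 + (y1^+2 + y2^+2).
  have h : L * m%:R <= 1 * m%:R by rewrite ler_wpM2r // ler0n.
  rewrite mulr_natr mul1r in h; lra.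
have aL : a * (L *+ m) <= a * (2 + (y1^+2 + y2^+2)) by rewrite ler_wpM2l.
rewrite ge_max; apply/andP; split; last first.
  have q0 : 0 <= y1^+2 + y2^+2 by rewrite addr_ge0 ?sqr_ge0.
  have := ltW c0; nra.
have E : a * (L *+ m *- 3) = - (3 * (a * (L *+ m))).
  by rewrite mulrN mulrnAr -mulr_natl.
rewrite E in Y; lra.
Qed.
End NegBound.
Section Measure.
Context {R : realType}.
Local Notation mu := (leb2 R).
Local Open Scope ereal_scope.

Lemma itv_measure (a b : R) : (a <= b)%R -> lebesgue_measure (`[a, b]%classic : set R) = (b - a)%:E.
Proof.
move=> ab; rewrite lebesgue_measure_itv /= lte_fin.
case: ltP => // ba; have -> : b = a by apply/eqP; rewrite eq_le ab ba.
by rewrite subrr.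
Qed.

Lemma box_measure (a b c d : R) : (a <= b)%R -> (c <= d)%R ->
  mu (`[a, b]%classic `*` `[c, d]%classic) = ((b - a) * (d - c))%:E.
Proof.
move=> ab cd; rewrite /leb2 product_measure1E //=.
have := itv_measure _ _ ab; have := itv_measure _ _ cd; rewrite /= => -> ->.
by rewrite EFinM.
Qed.

Lemma int_box (w : R) (B : set (R * R)) : measurable B -> (0 <= w)%R ->
  \int[mu]_(y in setT) (w * \1_B y)%:E = w%:E * mu B.
Proof.
move=> mB w0.
under eq_integral => y _ do rewrite EFinM.
rewrite ge0_integralZl //; first by rewrite integral_indic // setIT.
all: try by move=> y _; rewrite lee_fin indicE.
all: try by apply/measurable_EFinP; exact: measurable_indic.
Qed.

Lemma geo_sum (r : R) : \sum_(0 <= k <oo) (r / (2 ^ (k+1))%:R)%:E = r%:E.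
Proof.
have := @cvg_geometric_eseries_half R r 0; rewrite expr0 divr1 => /cvg_lim <- //.
Qed.
End Measure.
Section Series.
Context {R : realType}.
Local Notation mu := (leb2 R).

Definition boxT (x : R * R) (k : nat) : set (R * R) :=
  `[x.1 - (2^+k)^-1, x.1 + (2^+k)^-1]%classic `*`
  `[x.2 - (2^+k)^-1, x.2 + (2^+k)^-1]%classic.
Definition Tf (x : R * R) (y : R * R) : \bar R :=
  (\sum_(0 <= k <oo) ((2^+k.+1 : R) * \1_(boxT x k) y)%:E)%E.
Definition boxS (k : nat) : set (R * R) :=
  `[- 2^+k, 2^+k]%classic `*` `[- 2^+k, 2^+k]%classic.
Definition Sf (y : R * R) : \bar R :=
  (\sum_(0 <= k <oo) (((2^+k : R)^+3)^-1 * \1_(boxS k) y)%:E)%E.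

Local Open Scope ereal_scope.
Lemma mboxT x k : measurable (boxT x k).
Proof. by apply: measurableX; exact: measurable_itv. Qed.
Lemma mboxS k : measurable (boxS k).
Proof. by apply: measurableX; exact: measurable_itv. Qed.

Lemma term_le_series (u : nat -> \bar R) k : (forall n, 0 <= u n) ->
  u k <= \sum_(0 <= n <oo) u n.
Proof.
move=> u0; apply: le_trans (nneseries_lim_ge k.+1 (fun n _ _ => u0 n)).
rewrite big_nat_recr //= leeDr //.
by apply: sume_ge0 => n _; exact: u0.
Qed.

Lemma Tf_ge0 x y : 0 <= Tf x y.
Proof.
apply: nneseries_ge0 => n _ _; rewrite lee_fin mulr_ge0 ?exprn_ge0 // indicE.
Qed.
Lemma Sf_ge0 y : 0 <= Sf y.
Proof.
apply: nneseries_ge0 => n _ _; rewrite lee_fin mulr_ge0 ?invr_ge0 ?exprn_ge0 ?exprn_ge0 // indicE.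
Qed.

Lemma measurable_Tf x : measurable_fun setT (Tf x).
Proof.
apply: (ge0_emeasurable_sum (P := xpredT)).
  by move=> k y _ _; rewrite lee_fin mulr_ge0 ?exprn_ge0 // indicE.
move=> k _; apply/measurable_EFinP; apply: measurable_funM.
  exact: measurable_cst.
exact: measurable_indic (mboxT x k).
Qed.

Lemma measurable_Sf : measurable_fun setT Sf.
Proof.
apply: (ge0_emeasurable_sum (P := xpredT)).
  by move=> k y _ _; rewrite lee_fin mulr_ge0 ?invr_ge0 ?exprn_ge0 ?exprn_ge0 // indicE.
move=> k _; apply/measurable_EFinP; apply: measurable_funM.
  exact: measurable_cst.
exact: measurable_indic (mboxS k).
Qed.

Lemma int_Tf x : \int[mu]_(y in setT) Tf x y = 16%:E.
Proof.
rewrite /Tf integral_nneseries //; last first.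
  move=> k; apply/measurable_EFinP; apply: measurable_funM.
    exact: measurable_cst.
  exact: measurable_indic (mboxT x k).
rewrite -(geo_sum 16); apply: congr_lim; apply/funext => n.
apply: eq_bigr => k _.
have e0 : (0 < (2^+k)^-1 :> R)%R by rewrite invr_gt0 exprn_gt0.
rewrite int_box ?exprn_ge0 //; last exact: mboxT.
rewrite /boxT box_measure; last 2 first.
  by have := e0; lra.
  by have := e0; lra.
rewrite -EFinM; congr EFin.
rewrite addn1 natrX !exprS.
have h : (2^+k : R)%R != 0%R by rewrite expf_neq0.
by field; rewrite expf_neq0.
Qed.

Lemma int_Sf : \int[mu]_(y in setT) Sf y = 8%:E.
Proof.
rewrite /Sf integral_nneseries //; last first.
  move=> k; apply/measurable_EFinP; apply: measurable_funM.
    exact: measurable_cst.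
  exact: measurable_indic (mboxS k).
rewrite -(geo_sum 8); apply: congr_lim; apply/funext => n.
apply: eq_bigr => k _.
have e0 : (0 < (2^+k) :> R)%R by rewrite exprn_gt0.
rewrite int_box ?invr_ge0 ?exprn_ge0 //; last exact: mboxS.
rewrite /boxS box_measure; last 2 first.
  by have := e0; lra.
  by have := e0; lra.
rewrite -EFinM; congr EFin.
rewrite addn1 natrX !exprS.
have h : (2^+k : R)%R != 0%R by rewrite expf_neq0.
by field; rewrite expf_neq0.
Qed.
End Series.
Section Main.
Context {R : realType}.
Local Notation mu := (leb2 R).
Variables (C0 beta : R) (rho : R * R -> R).
Hypothesis rho0 : forall y, 0 <= rho y.
Hypothesis Hint : mu.-integrable setT (EFin \o rho).
Hypothesis Hent : (\int[mu]_(y in setT) (rho y * ln (rho y))%:E <= C0%:E)%E.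
Hypothesis Hmass : (\int[mu]_(y in setT) (rho y)%:E = beta%:E)%E.
Hypothesis Hmom : (\int[mu]_(y in setT) (sqnorm2 y * rho y)%:E <= C0%:E)%E.

Lemma mrho : measurable_fun setT rho.
Proof. by case/integrableP: Hint => /measurable_EFinP. Qed.

Lemma mq : measurable_fun setT (fun y : R * R => sqnorm2 y).
Proof.
rewrite /sqnorm2; apply: measurable_funD; apply: measurable_funX.
  exact: measurable_fst.
exact: measurable_snd.
Qed.

Lemma ms (x : R * R) : measurable_fun setT (fun y : R * R => sqnorm2 (x.1 - y.1, x.2 - y.2)).
Proof.
rewrite /sqnorm2 /=; apply: measurable_funD; apply: measurable_funX;
  apply: measurable_funB; try exact: measurable_cst.
  exact: measurable_fst.
exact: measurable_snd.
Qed.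

Definition Ef y := rho y * ln (rho y).
Definition Pp y := Num.max (Ef y) 0.
Definition Np y := Num.max (- Ef y) 0.

Lemma mEf : measurable_fun setT Ef.
Proof.
apply: measurable_funM; first exact: mrho.
exact: measurableT_comp (@measurable_ln R) mrho.
Qed.
Lemma mPp : measurable_fun setT Pp.
Proof. by apply: measurable_maxr; [exact: mEf|exact: measurable_cst]. Qed.
Lemma mNp : measurable_fun setT Np.
Proof. by apply: measurable_maxr; [exact: measurable_funN mEf|exact: measurable_cst]. Qed.


Lemma fin_of_le (e : \bar R) (c : R) : (0 <= e)%E -> (e <= c%:E)%E -> e = (fine e)%:E.
Proof.
move=> e0 ec; rewrite fineK // ge0_fin_numE //; exact: (le_lt_trans ec (ltry c)).
Qed.

Lemma int_scale (k : R) (f : R * R -> R) : 0 <= k -> (forall y, 0 <= f y) ->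
  measurable_fun setT f ->
  (\int[mu]_(y in setT) (k * f y)%:E = k%:E * \int[mu]_(y in setT) (f y)%:E)%E.
Proof.
move=> k0 f0 mf; under eq_integral => y _ do rewrite EFinM.
rewrite ge0_integralZl //; first by apply/measurable_EFinP.
by move=> y _; rewrite lee_fin.
Qed.

Lemma int_Np : (\int[mu]_(y in setT) (Np y)%:E <= (6 * beta + 3 * C0 + 8)%:E)%E.
Proof.
have Np0 (y : R * R) : 0 <= Np y by rewrite /Np le_max lexx orbT.
have q0 (y : R * R) : 0 <= sqnorm2 y by rewrite /sqnorm2 addr_ge0 ?sqr_ge0.
have mqr : measurable_fun setT (fun y => sqnorm2 y * rho y).
  by apply: measurable_funM; [exact: mq|exact: mrho].
have qr0 y : 0 <= sqnorm2 y * rho y by exact: mulr_ge0 (q0 y) (rho0 y).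
have pw y : ((Np y)%:E <= (6 * rho y)%:E + ((3 * (sqnorm2 y * rho y))%:E + Sf y))%E.
  have [k [h1 [h2 h3]]] := neg_bound (rho y) y.1 y.2 (rho0 y).
  have : ((((2^+k : R)^+3)^-1 * \1_(boxS k) y)%:E <= Sf y)%E.
    apply: (term_le_series (fun k => (((2^+k : R)^+3)^-1 * \1_(boxS k) y)%:E)).
    by move=> n; rewrite lee_fin mulr_ge0 ?invr_ge0 ?exprn_ge0 // indicE.
  have -> : \1_(boxS k) y = 1 :> R.
    rewrite indicE mem_set //; split; rewrite /= in_itv /= -ler_norml //.
  move=> hS; have H := (leeD (lexx ((6 * rho y)%:E)) (leeD (lexx ((3 * (sqnorm2 y * rho y))%:E)) hS)).
  apply: le_trans; last exact: H.
  rewrite mulr1 -!EFinD lee_fin /Np /Ef; apply: (le_trans h3).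
  rewrite /sqnorm2; lra.
have m6 : measurable_fun setT (fun y => (6 * rho y)%:E).
  by apply/measurable_EFinP; apply: measurable_funM; [exact: measurable_cst|exact: mrho].
have m3 : measurable_fun setT (fun y => (3 * (sqnorm2 y * rho y))%:E).
  by apply/measurable_EFinP; apply: measurable_funM; [exact: measurable_cst|exact: mqr].
have I1 : (\int[mu]_(y in setT) (Np y)%:E <=
    \int[mu]_(y in setT) ((6 * rho y)%:E + ((3 * (sqnorm2 y * rho y))%:E + Sf y)))%E.
  apply: ge0_le_integral => //.
  - by move=> y _; rewrite lee_fin.
  - by apply/measurable_EFinP; exact: mNp.
  - by apply: emeasurable_funD => //; apply: emeasurable_funD => //; exact: measurable_Sf.
rewrite ge0_integralD // in I1; last 3 first.
  - by move=> y _; rewrite lee_fin mulr_ge0.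
  - by move=> y _; rewrite adde_ge0 ?Sf_ge0 // lee_fin mulr_ge0.
  - by apply: emeasurable_funD => //; exact: measurable_Sf.
rewrite ge0_integralD // in I1; last 3 first.
  - by move=> y _; rewrite lee_fin mulr_ge0.
  - by move=> y _; exact: Sf_ge0.
  - exact: measurable_Sf.
rewrite int_scale // in I1; last exact: mrho.
rewrite int_scale // in I1.
rewrite Hmass int_Sf in I1.
have M0 : (0 <= \int[mu]_(y in setT) (sqnorm2 y * rho y)%:E)%E.
  by apply: integral_ge0 => y _; rewrite lee_fin.
have Hm := Hmom.
rewrite (fin_of_le _ _ M0 Hmom) in I1 Hm.
apply: (le_trans I1); rewrite -!EFinM -!EFinD lee_fin.
rewrite lee_fin in Hm; lra.
Qed.


Lemma int_Pp : (\int[mu]_(y in setT) (Pp y)%:E <= (C0 + (6 * beta + 3 * C0 + 8))%:E)%E.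
Proof.
have H := Hent; rewrite integralE in H.
have EP : ((fun y => (rho y * ln (rho y))%:E)^\+)%E = (fun y => (Pp y)%:E).
  by apply/funext => y; rewrite funeposE /Pp /Ef (@EFin_max R (rho y * ln (rho y)) 0).
have EN : ((fun y => (rho y * ln (rho y))%:E)^\-)%E = (fun y => (Np y)%:E).
  by apply/funext => y; rewrite funenegE /Np /Ef (@EFin_max R (- (rho y * ln (rho y))) 0).
rewrite EP EN in H.
have N0 : (0 <= \int[mu]_(y in setT) (Np y)%:E)%E.
  by apply: integral_ge0 => y _; rewrite lee_fin /Np le_max lexx orbT.
have HN := int_Np; have HN2 := HN.
rewrite (fin_of_le _ _ N0 HN2) in H HN.
rewrite leeBlDr // in H.
apply: (le_trans H); rewrite -EFinD lee_fin lerD2l.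
by rewrite lee_fin in HN.
Qed.


Variable x : R * R.
Definition sx (y : R * R) := sqnorm2 (x.1 - y.1, x.2 - y.2).
Definition L2 (y : R * R) := Num.max (- ln (sx y)) 0.

Lemma msx : measurable_fun setT sx.
Proof. exact: ms. Qed.
Lemma mL2 : measurable_fun setT L2.
Proof.
apply: measurable_maxr; last exact: measurable_cst.
apply: measurable_funN; exact: measurableT_comp (@measurable_ln R) msx.
Qed.

Lemma int_L2 : (\int[mu]_(y in setT) (rho y * L2 y)%:E <=
   (2 * (C0 + (6 * beta + 3 * C0 + 8)) + 32)%:E)%E.
Proof.
have Pp0 (y : R * R) : 0 <= Pp y by rewrite /Pp le_max lexx orbT.
have pw y : ((rho y * L2 y)%:E <= (2 * Pp y)%:E + 2%:E * Tf x y)%E.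
  have T0 := Tf_ge0 x y.
  have [h|[k [h1 [h2 h3]]]] := sing_bound (rho y) (x.1 - y.1) (x.2 - y.2) (rho0 y).
    apply: le_trans (leeDl _ _); last by rewrite mule_ge0.
    by rewrite lee_fin /L2 /sx /sqnorm2 /=; exact: h.
  have : (((2^+k.+1 : R) * \1_(boxT x k) y)%:E <= Tf x y)%E.
    apply: (term_le_series (fun k => ((2^+k.+1 : R) * \1_(boxT x k) y)%:E)).
    by move=> n; rewrite lee_fin mulr_ge0 ?exprn_ge0 // indicE.
  have -> : \1_(boxT x k) y = 1 :> R.
    rewrite indicE mem_set //; split; rewrite /= in_itv /=.
      by move: h1; rewrite ler_norml; case/andP => ? ?; apply/andP; split; lra.
    by move: h2; rewrite ler_norml; case/andP => ? ?; apply/andP; split; lra.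
  rewrite mulr1 => hT.
  have H := leeD (lexx ((2 * Pp y)%:E)) (lee_wpmul2l (x := 2%:E) ltac:(by rewrite lee_fin) hT).
  apply: (le_trans _ H); rewrite -EFinM -EFinD lee_fin.
  by move: h3; rewrite /L2 /sx /sqnorm2 /Pp /Ef /=.
have mT := measurable_Tf x.
have m2P : measurable_fun setT (fun y => (2 * Pp y)%:E).
  by apply/measurable_EFinP; apply: measurable_funM; [exact: measurable_cst|exact: mPp].
have I1 : (\int[mu]_(y in setT) (rho y * L2 y)%:E <=
    \int[mu]_(y in setT) ((2 * Pp y)%:E + 2%:E * Tf x y))%E.
  apply: ge0_le_integral => //.
  - by move=> y _; rewrite lee_fin mulr_ge0 // /L2 le_max lexx orbT.
  - by apply/measurable_EFinP; apply: measurable_funM; [exact: mrho|exact: mL2].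
  - by apply: emeasurable_funD => //; apply: emeasurable_funM => //; exact: measurable_cst.
rewrite ge0_integralD // in I1; last 3 first.
  - by move=> y _; rewrite lee_fin mulr_ge0.
  - by move=> y _; rewrite mule_ge0 // Tf_ge0.
  - by apply: emeasurable_funM => //; exact: measurable_cst.
rewrite int_scale // in I1; last exact: mPp.
rewrite ge0_integralZl // in I1; last by move=> y _; exact: Tf_ge0.
rewrite int_Tf in I1.
have P0 : (0 <= \int[mu]_(y in setT) (Pp y)%:E)%E.
  by apply: integral_ge0 => y _; rewrite lee_fin.
have HP := int_Pp; have HP2 := HP.
rewrite (fin_of_le _ _ P0 HP2) in I1 HP.
apply: (le_trans I1); rewrite -!EFinM -!EFinD lee_fin.
rewrite lee_fin in HP; lra.
Qed.


Hypothesis Q1 : 1 < sqnorm2 x.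

Definition gf (y : R * R) := (ln (sx y) / 2 - ln (norm2 x)) * rho y.
Definition hf (y : R * R) := 2 * rho y + 2 * (sqnorm2 y * rho y) + rho y * L2 y.

Lemma gf_bound y : `|gf y| <= hf y.
Proof.
rewrite /gf /hf /norm2 ln_sqrt normrM (ger0_norm (rho0 y)).
have q0 : 0 <= sqnorm2 y by rewrite /sqnorm2 addr_ge0 ?sqr_ge0.
have H := @logdiff R (sqnorm2 x) (sx y) (sqnorm2 y) Q1 _ _ q0.
have /H {}H : sx y <= 2 * sqnorm2 x + 2 * sqnorm2 y.
  rewrite /sx /sqnorm2 /=.
  have := sqr_ge0 (x.1 + y.1); have := sqr_ge0 (x.2 + y.2); nra.
have /H {}H : sqnorm2 x <= 2 * sx y + 2 * sqnorm2 y.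
  rewrite /sx /sqnorm2 /=.
  have := sqr_ge0 (x.1 - 2 * y.1); have := sqr_ge0 (x.2 - 2 * y.2); nra.
have -> : ln (sx y) / 2 - ln (sqnorm2 x) / 2 = (ln (sx y) - ln (sqnorm2 x)) / 2 by field.
rewrite normrM (ger0_norm (_ : 0 <= 2^-1)) ?invr_ge0 ?ler0n //.
have L0 : 0 <= L2 y by rewrite /L2 le_max lexx orbT.
have a0 := rho0 y.
rewrite /L2 in L0 *.
set D := `|ln (sx y) - ln (sqnorm2 x)| in H *.
set M := Num.max (- ln (sx y)) 0 in H L0 *.
have : D * 2^-1 * rho y <= (3 + 4 * sqnorm2 y + M) * 2^-1 * rho y.
  by rewrite ler_wpM2r // ler_wpM2r ?invr_ge0 ?ler0n.
nra.
Qed.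

Lemma mgf : measurable_fun setT gf.
Proof.
apply: measurable_funM; last exact: mrho.
apply: measurable_funB; last exact: measurable_cst.
apply: measurable_funM; last exact: measurable_cst.
exact: measurableT_comp (@measurable_ln R) msx.
Qed.

Lemma mhf : measurable_fun setT hf.
Proof.
apply: measurable_funD; [apply: measurable_funD|].
- by apply: measurable_funM; [exact: measurable_cst|exact: mrho].
- apply: measurable_funM; first exact: measurable_cst.
  by apply: measurable_funM; [exact: mq|exact: mrho].
- by apply: measurable_funM; [exact: mrho|exact: mL2].
Qed.

Definition Kc := 2 * beta + 2 * C0 + (2 * (C0 + (6 * beta + 3 * C0 + 8)) + 32).

Lemma int_hf : (\int[mu]_(y in setT) (hf y)%:E <= Kc%:E)%E.
Proof.
have q0 (y : R * R) : 0 <= sqnorm2 y by rewrite /sqnorm2 addr_ge0 ?sqr_ge0.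
have L0 (y : R * R) : 0 <= L2 y by rewrite /L2 le_max lexx orbT.
have mqr : measurable_fun setT (fun y => sqnorm2 y * rho y).
  by apply: measurable_funM; [exact: mq|exact: mrho].
have mrL : measurable_fun setT (fun y => rho y * L2 y).
  by apply: measurable_funM; [exact: mrho|exact: mL2].
rewrite /hf.
under eq_integral => y _ do rewrite !EFinD.
rewrite ge0_integralD //; last 4 first.
  - by move=> y _; rewrite adde_ge0 // lee_fin ?mulr_ge0.
  - by apply: emeasurable_funD; apply/measurable_EFinP;
      (apply: measurable_funM; [exact: measurable_cst|]); [exact: mrho|exact: mqr].
  - by move=> y _; rewrite lee_fin mulr_ge0.
  - by apply/measurable_EFinP.
rewrite ge0_integralD //; last 4 first.
  - by move=> y _; rewrite lee_fin mulr_ge0.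
  - by apply/measurable_EFinP; apply: measurable_funM; [exact: measurable_cst|exact: mrho].
  - by move=> y _; rewrite lee_fin mulr_ge0 // mulr_ge0.
  - by apply/measurable_EFinP; apply: measurable_funM; [exact: measurable_cst|exact: mqr].
rewrite int_scale //; last exact: mrho.
rewrite int_scale //; last by move=> y; rewrite mulr_ge0.
rewrite Hmass.
have M0 : (0 <= \int[mu]_(y in setT) (sqnorm2 y * rho y)%:E)%E.
  by apply: integral_ge0 => y _; rewrite lee_fin mulr_ge0.
have Hm := Hmom; have Hm2 := Hmom.
rewrite (fin_of_le _ _ M0 Hm2) in Hm *.
have L20 : (0 <= \int[mu]_(y in setT) (rho y * L2 y)%:E)%E.
  by apply: integral_ge0 => y _; rewrite lee_fin mulr_ge0.
have HL := int_L2; have HL2 := HL.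
rewrite (fin_of_le _ _ L20 HL2) in HL *.
rewrite -!EFinM -!EFinD lee_fin.
rewrite !lee_fin in Hm HL; rewrite /Kc; lra.
Qed.

Lemma hf_ge0 y : 0 <= hf y.
Proof.
have q0 : 0 <= sqnorm2 y by rewrite /sqnorm2 addr_ge0 ?sqr_ge0.
have L0 : 0 <= L2 y by rewrite /L2 le_max lexx orbT.
by rewrite /hf !addr_ge0 ?mulr_ge0.
Qed.

Lemma int_hf_integrable : mu.-integrable setT (EFin \o hf).
Proof.
apply/integrableP; split; first by apply/measurable_EFinP; exact: mhf.
apply: (le_lt_trans _ (ltry Kc)); apply: (le_trans _ int_hf).
apply: ge0_le_integral => //.
- apply: measurableT_comp; first exact: abse_measurable.
  by apply/measurable_EFinP; exact: mhf.
- by apply/measurable_EFinP; exact: mhf.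
- by move=> y _ /=; rewrite lee_fin ger0_norm // hf_ge0.
Qed.

Lemma gf_integrable : mu.-integrable setT (EFin \o gf).
Proof.
apply: le_integrable int_hf_integrable => //.
  by apply/measurable_EFinP; exact: mgf.
by move=> y _ /=; rewrite lee_fin (ger0_norm (hf_ge0 y)) gf_bound.
Qed.

Lemma Rint_abs_gf : \int[mu]_(y in setT) `|gf y| <= Kc.
Proof.
rewrite /Rintegral.
have I : (\int[mu]_(y in setT) (`|gf y|)%:E <= Kc%:E)%E.
  apply: le_trans int_hf; apply: ge0_le_integral => //.
  all: try by move=> y _; rewrite lee_fin ?gf_bound.
  all: try by apply/measurable_EFinP; exact: mhf.
  all: try by apply/measurable_EFinP; apply: measurableT_comp mgf; exact: normr_measurable.
have I0 : (0 <= \int[mu]_(y in setT) (`|gf y|)%:E)%E.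
  by apply: integral_ge0 => y _; rewrite lee_fin.
have I2 := I.
by rewrite (fin_of_le _ _ I0 I2) lee_fin in I.
Qed.

Lemma main_x : `| logpot rho x + beta / (2 * pi) * ln (norm2 x) | <= (2 * pi)^-1 * Kc.
Proof.
rewrite /logpot.
have E : \int[mu]_(y in setT) (ln (norm2 (x.1 - y.1, x.2 - y.2)) * rho y) =
         \int[mu]_(y in setT) (gf y + ln (norm2 x) * rho y).
  apply: eq_Rintegral => y _; rewrite /gf /sx /norm2 !ln_sqrt; ring.
have iZ : mu.-integrable setT (EFin \o (fun y => ln (norm2 x) * rho y)).
  apply: (eq_integrable measurableT _ _ _ (integrableZl measurableT (ln (norm2 x)) Hint)).
  by move=> y _; rewrite /= EFinM.
rewrite E RintegralD //; last exact: gf_integrable.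
rewrite RintegralZl //.
have -> : \int[mu]_(y in setT) rho y = beta by rewrite /Rintegral Hmass.
set G := \int[mu]_(y in setT) gf y.
have -> : - (2 * pi)^-1 * (G + ln (norm2 x) * beta) + beta / (2 * pi) * ln (norm2 x)
   = - ((2 * pi)^-1 * G) by ring.
have pi0 : 0 < (2 * pi :> R) by rewrite mulr_gt0 // pi_gt0.
rewrite normrN normrM ger0_norm; last by rewrite invr_ge0 ltW.
rewrite ler_pM2l ?invr_gt0 //.
apply: le_trans (Rint_abs_gf).
apply: le_normr_Rintegral => //; exact: gf_integrable.
Qed.
End Main.
Theorem lemma5 (R : realType) (C0 beta : R) :
  exists C Rad : R, forall rho : R * R -> R,
    (forall y, 0 <= rho y) ->
    (leb2 R).-integrable setT (EFin \o rho) ->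
    (\int[leb2 R]_(y in setT) (rho y * ln (rho y))%:E <= C0%:E)%E ->
    (\int[leb2 R]_(y in setT) (rho y)%:E = beta%:E)%E ->
    (\int[leb2 R]_(y in setT) (sqnorm2 y * rho y)%:E <= C0%:E)%E ->
    forall x : R * R, Rad < norm2 x ->
      `| logpot rho x + beta / (2 * pi) * ln (norm2 x) | <= C.
Proof.
exists ((2 * pi)^-1 * Kc C0 beta), 1.
move=> rho rho0 Hint Hent Hmass Hmom x Hx.
apply: (main_x C0 beta rho rho0 Hint Hent Hmass Hmom x).
rewrite ltNge; apply/negP => Q1.
have : ~~ (1 < norm2 x) by rewrite -leNgt /norm2 -sqrtr1 ler_sqrt.
by rewrite Hx.
Qed.
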